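(* Let $m,n\in\mathbb N$ with $m\ge 5$, $n\ge 8$, $n>m$, and let $j\in\{1,2\}$. Then $r(K_{1,m-1},T_n^j)\in\{m+n-4,\ m+n-5\}$. Moreover, if $mn$ is even, then $r(K_{1,m-1},T_n^j)=m+n-4$.
   Context: All graphs are finite and simple; a graph ''contains'' $H$ if it has a subgraph isomorphic to $H$. $K_{1,m-1}$ is the star on $m$ vertices. For graphs $G_1,G_2$, the Ramsey number $r(G_1,G_2)$ is the smallest positive integer $N$ such that for every graph $G$ on $N$ vertices, either $G$ contains a copy of $G_1$ or the complement $\overline G$ contains a copy of $G_2$. For $n\ge 5$, $T_n^1$ is the tree with vertex set $\{v_0,\ldots,v_{n-1}\}$ and edges $v_0v_1,\ldots,v_0v_{n-3},v_{n-4}v_{n-2},v_{n-3}v_{n-1}$, and $T_n^2$ is the tree on the same vertex set with edges $v_0v_1,\ldots,v_0v_{n-3},v_{n-3}v_{n-2},v_{n-3}v_{n-1}$. *)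

(* Defs.v *)
From mathcomp Require Import all_boot.
Set Implicit Arguments. Unset Strict Implicit. Unset Printing Implicit Defensive.

Definition simple_graph (N : nat) (G : rel 'I_N) : Prop :=
  (forall x, ~~ G x x) /\ (forall x y, G x y = G y x).

Definition compl_graph (N : nat) (G : rel 'I_N) : rel 'I_N :=
  fun x y => (x != y) && ~~ G x y.

Definition contains (k N : nat) (H : rel 'I_k) (G : rel 'I_N) : Prop :=
  exists f : 'I_k -> 'I_N, injective f /\ (forall i j, H i j -> G (f i) (f j)).

Definition ramsey_prop (k1 k2 : nat) (G1 : rel 'I_k1) (G2 : rel 'I_k2) (N : nat) : Prop :=
  forall G : rel 'I_N, simple_graph G ->
    contains G1 G \/ contains G2 (compl_graph G).

Definition is_ramsey_number (k1 k2 : nat) (G1 : rel 'I_k1) (G2 : rel 'I_k2) (N : nat) : Prop :=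
  0 < N /\ ramsey_prop G1 G2 N /\ (forall M, 0 < M -> M < N -> ~ ramsey_prop G1 G2 M).

Definition symc (k : nat) (e : nat -> nat -> bool) : rel 'I_k :=
  fun x y => e (val x) (val y) || e (val y) (val x).

Definition star (m : nat) : rel 'I_m :=
  @symc m (fun a b => (a == 0) && (b != 0)).

(* T_n^1: edges v0v1..v0v_{n-3}, v_{n-4}v_{n-2}, v_{n-3}v_{n-1} *)
Definition tree1 (n : nat) : rel 'I_n :=
  @symc n (fun a b => [|| (a == 0) && (1 <= b <= n - 3),
                         (a == n - 4) && (b == n - 2) |
                         (a == n - 3) && (b == n - 1)]).

(* T_n^2: edges v0v1..v0v_{n-3}, v_{n-3}v_{n-2}, v_{n-3}v_{n-1} *)
Definition tree2 (n : nat) : rel 'I_n :=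
  @symc n (fun a b => [|| (a == 0) && (1 <= b <= n - 3),
                         (a == n - 3) && (b == n - 2) |
                         (a == n - 3) && (b == n - 1)]).

Definition treej (j n : nat) : rel 'I_n := if j == 1 then @tree1 n else @tree2 n.
Arguments star m : clear implicits.
Arguments tree1 n : clear implicits.
Arguments tree2 n : clear implicits.
Arguments treej j n : clear implicits.

(* Main.v *)
Require Import Defs.
From mathcomp Require Import all_boot zify.
From Stdlib Require Import Classical.
Set Implicit Arguments. Unset Strict Implicit. Unset Printing Implicit Defensive.

Lemma pick (T : finType) (A B : {set T}) : #|B| < #|A| -> exists2 x, x \in A & x \notin B.
Proof.
move=> h; case: (boolP [exists x in A, x \notin B]) => [/exists_inP // | /exists_inPn H].
have : A \subset B by apply/subsetP => x /H /negbNE.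
by move/subset_leq_card; rewrite leqNgt h.
Qed.

Lemma pickd (T : finType) (A B : {set T}) k l : #|B| <= k -> l <= #|A| -> k < l -> exists2 x, x \in A & x \notin B.
Proof. move=> h1 h2 h3; apply: pick; exact: leq_ltn_trans h1 (leq_trans h3 h2). Qed.

Lemma cardU_le (T : finType) (A B : {set T}) : #|A :|: B| <= #|A| + #|B|.
Proof. exact: (leq_card_setU A B).1. Qed.
Lemma card1le (T : finType) (a : T) : #|[set a]| <= 1.
Proof. by rewrite cards1. Qed.
Lemma card2le (T : finType) (a b : T) : #|[set a; b]| <= 2.
Proof. by rewrite cards2; case: (_ != _). Qed.
Lemma card3le (T : finType) (a b c : T) : #|[set a; b; c]| <= 3.
Proof. have := cardU_le [set a; b] [set c]; have := card2le a b; rewrite cards1; lia. Qed.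
Lemma card4le (T : finType) (a b c d : T) : #|[set a; b; c; d]| <= 4.
Proof. have := cardU_le [set a; b; c] [set d]; have := card3le a b c; rewrite cards1; lia. Qed.

Lemma cardsD_ge (T : finType) (A B : {set T}) : #|A| - #|B| <= #|A :\: B|.
Proof. rewrite cardsD; have := subset_leq_card (subsetIr A B); lia. Qed.

Lemma card_le1_eq (T : finType) (B : {set T}) x y : #|B| <= 1 -> x \in B -> y \in B -> x = y.
Proof.
move=> hB hx hy; apply/eqP/negPn/negP => ne.
have : [set x; y] \subset B by apply/subsetP => z; rewrite !inE => /orP[]/eqP->.
move/subset_leq_card; rewrite cards2 ne; lia.
Qed.

Lemma pick2 (T : finType) (A : {set T}) n : 2 <= n -> n <= #|A| -> exists x y, [/\ x \in A, y \in A & x != y].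
Proof.
move=> h2 hA. have [x hx _] := @pick _ A set0 ltac:(rewrite cards0; lia).
have [y hy] := @pick _ A [set x] ltac:(rewrite cards1; lia).
rewrite inE => ne; exists x, y; split=> //; by rewrite eq_sym.
Qed.
Definition nb N (H : rel 'I_N) x : {set 'I_N} := [set y | H x y].

Lemma embed N (H : rel 'I_N) n (S : {set 'I_N}) v0 p1 p2 x y :
 8 <= n -> simple_graph H -> (forall z, z \in S -> H v0 z) -> n - 5 <= #|S| ->
 (forall z, z \in S -> z \notin [:: v0; p1; p2; x; y]) -> uniq [:: v0; p1; p2; x; y] ->
 H v0 p1 -> H v0 p2 ->
 (H p1 x -> H p2 y -> contains (tree1 n) H) /\ (H p2 x -> H p2 y -> contains (tree2 n) H).
Proof.
move=> n8 [irr sym] HS cS dS uq h1 h2.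
set t := take (n-5) (enum S).
have st : size t = n - 5.
  by rewrite /t size_take -cardE; case: ltnP => //; lia.
have tS : forall z, z \in t -> z \in S by move=> z /mem_take; rewrite mem_enum.
set L := v0 :: t ++ [:: p1; p2; x; y].
have sL : size L = n by rewrite /L /= size_cat st /=; lia.
have uL : uniq L.
  rewrite /L cons_uniq cat_uniq take_uniq ?enum_uniq //.
  move: uq; rewrite /= !inE => /andP[hv /andP[h1' /andP[h2' /andP[hx' _]]]].
  have nt : forall z, z \in [:: v0; p1; p2; x; y] -> z \notin t.
    by move=> z hz; apply/negP => /tS /dS; rewrite hz.
  have nv : v0 \notin t by apply: nt; rewrite !inE eqxx ?orbT.
  have np1 : p1 \notin t by apply: nt; rewrite !inE eqxx ?orbT.
  have np2 : p2 \notin t by apply: nt; rewrite !inE eqxx ?orbT.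
  have nx : x \notin t by apply: nt; rewrite !inE eqxx ?orbT.
  have ny : y \notin t by apply: nt; rewrite !inE eqxx ?orbT.
  rewrite h1' h2' hx' mem_cat negb_or (negbTE nv) (negbTE np1) (negbTE np2) (negbTE nx) (negbTE ny).
  by rewrite /= !inE hv.
have hLk : forall i, nth v0 L ((n-5).+1 + i) = nth v0 [:: p1; p2; x; y] i.
  by move=> i; rewrite /L addSn /= nth_cat st ltnNge leq_addr /= addKn.
have hLt : forall k, 1 <= k <= n - 3 -> H v0 (nth v0 L k).
  move=> k /andP[k1 k2]; case: (ltnP k (n-4)) => k3.
    have -> : k = (k.-1).+1 by lia.
    rewrite /L /= nth_cat st ifT; last by lia.
    by apply/HS/tS/mem_nth; rewrite st; lia.
  case: (k =P n - 4) => [->|ne]; first by (have -> : n - 4 = (n-5).+1 + 0 by lia); rewrite hLk.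
  by (have -> : k = (n-5).+1 + 1 by lia); rewrite hLk.
pose f := fun i : 'I_n => nth v0 L i.
have finj : injective f.
  move=> i j /eqP; rewrite /f nth_uniq ?sL ?ltn_ord // => /eqP h; exact: val_inj.
have gen : forall (e : nat -> nat -> bool), (forall a b, b < n -> e a b -> H (nth v0 L a) (nth v0 L b)) ->
   forall i j : 'I_n, symc e i j -> H (f i) (f j).
  move=> e key i j /orP[] h; first exact: key.
  by rewrite sym; apply: key.
split=> hx hy; exists f; split=> //; apply: gen => a b bn.
- case/or3P => /andP[/eqP -> hb].
  + exact: hLt.
  + by move/eqP: hb => ->; (have -> : n - 4 = (n-5).+1 + 0 by lia); (have -> : n - 2 = (n-5).+1 + 2 by lia); rewrite !hLk.
  + by move/eqP: hb => ->; (have -> : n - 3 = (n-5).+1 + 1 by lia); (have -> : n - 1 = (n-5).+1 + 3 by lia); rewrite !hLk.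
- case/or3P => /andP[/eqP -> hb].
  + exact: hLt.
  + by move/eqP: hb => ->; (have -> : n - 3 = (n-5).+1 + 1 by lia); (have -> : n - 2 = (n-5).+1 + 2 by lia); rewrite !hLk.
  + by move/eqP: hb => ->; (have -> : n - 3 = (n-5).+1 + 1 by lia); (have -> : n - 1 = (n-5).+1 + 3 by lia); rewrite !hLk.
Qed.

Lemma neqE N (H : rel 'I_N) a b : simple_graph H -> H a b -> a != b.
Proof. by move=> [irr _] h; apply/eqP => e; move: h; rewrite e (negbTE (irr b)). Qed.

Lemma finish2 N (H : rel 'I_N) n v0 u w1 w2 : 8 <= n -> simple_graph H -> H v0 u -> H u w1 -> H u w2 ->
  w1 != w2 -> v0 != w1 -> v0 != w2 -> n - 3 <= #|nb H v0 :\: [set w1; w2]| -> contains (tree2 n) H.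
Proof.
move=> n8 sH hu h1 h2 ne12 ne1 ne2 c.
have cu : #|[set u]| < #|nb H v0 :\: [set w1;w2]| by have := card1le u; lia.
have [p1 hp1 np1] := pick cu.
set S := (nb H v0 :\: [set w1; w2]) :\: [set p1; u].
have cS : n - 5 <= #|S|.
  apply: leq_trans _ (cardsD_ge _ _); apply: (@leq_trans (n - 3 - 2)); first lia.
  exact: leq_sub c (card2le p1 u).
move: hp1 np1; rewrite /nb !inE => /andP[hp1 hvp] np1.
move: hp1; rewrite negb_or => /andP[n1 n2].
apply: (proj2 (@embed N H n S v0 p1 u w1 w2 n8 sH _ cS _ _ _ hu)) => //.
- by move=> z; rewrite /S /nb !inE => /andP[_ /andP[_ ->]].
- move=> z; rewrite /S /nb !inE !negb_or => /andP[/andP[a b] /andP[/andP[c1 d] hz]].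
  by rewrite eq_sym (neqE sH hz) a b c1 d.
- rewrite /= !inE !negb_or (neqE sH hvp) (neqE sH hu) ne1 ne2 np1 (neqE sH h1) (neqE sH h2) ne12.
  by rewrite n1 n2.
Qed.

Lemma finish1 N (H : rel 'I_N) n v0 a b wa wb : 8 <= n -> simple_graph H -> H v0 a -> H v0 b -> H a wa -> H b wb ->
  a != b -> wa != wb -> v0 != wa -> v0 != wb -> a != wb -> b != wa ->
  n - 3 <= #|nb H v0 :\: [set wa; wb]| -> contains (tree1 n) H.
Proof.
move=> n8 sH ha hb hwa hwb nab nw nva nvb nawb nbwa c.
set S := (nb H v0 :\: [set wa; wb]) :\: [set a; b].
have cS : n - 5 <= #|S|.
  apply: leq_trans _ (cardsD_ge _ _); apply: (@leq_trans (n - 3 - 2)); first lia.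
  exact: leq_sub c (card2le a b).
apply: (proj1 (@embed N H n S v0 a b wa wb n8 sH _ cS _ _ ha hb)) => //.
- by move=> z; rewrite /S /nb !inE => /andP[_ /andP[_ ->]].
- move=> z; rewrite /S /nb !inE !negb_or => /andP[/andP[a1 b1] /andP[/andP[c1 d] hz]].
  by rewrite eq_sym (neqE sH hz) a1 b1 c1 d.
- rewrite /= !inE !negb_or (neqE sH ha) (neqE sH hb) nva nvb nab (neqE sH hwa) nawb (neqE sH hwb) nw.
  by rewrite /= !andbT.
Qed.

Lemma nbE N (H : rel 'I_N) x y : (y \in nb H x) = H x y.
Proof. by rewrite inE. Qed.

Lemma cnt2 (T : finType) (A : {set T}) x y k : k + 2 <= #|A| -> k <= #|A :\: [set x; y]|.
Proof.
move=> h; apply: leq_trans _ (cardsD_ge _ _); apply: (@leq_trans (k + 2 - 2)); first lia.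
exact: leq_sub h (card2le x y).
Qed.

Lemma cnt1 (T : finType) (A : {set T}) x y k : x \notin A -> k + 1 <= #|A| -> k <= #|A :\: [set x; y]|.
Proof.
move=> hx h; have sub : A :\ y \subset A :\: [set x; y].
  apply/subsetP => z; rewrite !inE => /andP[zy zA]; rewrite zA negb_or zy !andbT.
  by apply/negP => /eqP e; move: hx; rewrite -e zA.
apply: leq_trans (subset_leq_card sub); move: h; rewrite (cardsD1 y A).
by case: (y \in A) => /=; lia.
Qed.

Lemma cnt0 (T : finType) (A : {set T}) x y k : x \notin A -> y \notin A -> k <= #|A| -> k <= #|A :\: [set x; y]|.
Proof.
move=> hx hy h; have -> : A :\: [set x; y] = A; last by [].
apply/setP => z; rewrite !inE; case zA: (z \in A); rewrite ?andbF // andbT.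
by apply/negP => /orP[]/eqP e; [move: hx | move: hy]; rewrite -e zA.
Qed.

Lemma case_big n N (H : rel 'I_N) v0 : 8 <= n -> simple_graph H -> (forall x, n - 3 <= #|nb H x|) ->
  n - 1 <= #|nb H v0| -> contains (tree1 n) H /\ contains (tree2 n) H.
Proof.
move=> n8 sH deg big.
have [u hu _] := @pick _ (nb H v0) set0 ltac:(rewrite cards0; lia).
rewrite nbE in hu.
split.
- have [wa hwa nwa] := pickd (card1le v0) (deg u) ltac:(lia).
  have [b hb nb'] := pickd (card2le u wa) big ltac:(lia).
  have [wb hwb nwb] := pickd (card3le v0 u wa) (deg b) ltac:(lia).
  move: hwa nwa hb nb' hwb nwb; rewrite !nbE !inE !negb_or => hwa nwa hb /andP[bu bwa] hwb /andP[/andP[wbv wbu] wbwa].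
  apply: (finish1 n8 sH hu hb hwa hwb) => //.
  + by rewrite eq_sym.
  + by rewrite eq_sym.
  + by rewrite eq_sym.
  + by rewrite eq_sym.
  + by rewrite eq_sym.
  + by apply: cnt2; lia.
- have [w1 hw1 nw1] := pickd (card1le v0) (deg u) ltac:(lia).
  have [w2 hw2 nw2] := pickd (card2le v0 w1) (deg u) ltac:(lia).
  move: hw1 nw1 hw2 nw2; rewrite !nbE !inE !negb_or => hw1 nw1 hw2 /andP[w2v w2w1].
  apply: (finish2 n8 sH hu hw1 hw2).
  + by rewrite eq_sym.
  + by rewrite eq_sym.
  + by rewrite eq_sym.
  + by apply: cnt2; lia.
Qed.

Lemma case_mid m n N (H : rel 'I_N) v0 : 5 <= m -> 8 <= n -> m < n -> N = m + n - 4 -> simple_graph H ->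
  (forall x, n - 3 <= #|nb H x|) ->
  #|nb H v0| = n - 2 -> contains (tree1 n) H /\ contains (tree2 n) H.
Proof.
move=> m5 n8 mn eN sH deg dv.
have [irr sym] := sH.
set C := v0 |: nb H v0.
have e1 : #|C| = n - 1 by rewrite /C cardsU1 nbE irr dv; lia.
have e2 : #|~: C| = N - (n - 1) by have := cardsC C; rewrite card_ord e1; lia.
have [o _ oC] := @pickd _ setT C (n - 1) N ltac:(by rewrite e1) ltac:(by rewrite cardsT card_ord) ltac:(lia).
have e3 : #|~: C :\ o| = N - n.
  by have := cardsD1 o (~: C); rewrite inE oC e2 /=; lia.
have [u hou uC] := @pickd _ (nb H o) (~: C :\ o) (N - n) (n - 3) ltac:(by rewrite e3) (deg o) ltac:(lia).
rewrite nbE in hou.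
move: uC; rewrite !inE negb_and negbK negbK eq_sym (negbTE (neqE sH hou)) /= => /orP[/eqP uv | hu].
  by move: oC; rewrite /C !inE sym -uv hou orbT.
move: oC; rewrite /C !inE negb_or => /andP[ov onb].
have huo : H u o by rewrite sym.
split.
- have [b hb nb'] := pickd (card1le u) (deg v0) ltac:(lia).
  have [wb hwb nwb] := pickd (card3le v0 u o) (deg b) ltac:(lia).
  move: hb nb' hwb nwb; rewrite !nbE !inE !negb_or => hb bu hwb /andP[/andP[wbv wbu] wbo].
  apply: (finish1 n8 sH hu hb huo hwb).
  + by rewrite eq_sym.
  + by rewrite eq_sym.
  + by rewrite eq_sym.
  + by rewrite eq_sym.
  + by rewrite eq_sym.
  + by apply/eqP => e; move: onb; rewrite -e hb.
  + by apply: cnt1 => //; [rewrite nbE | rewrite dv; lia].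
- have [w2 hw2 nw2] := pickd (card2le v0 o) (deg u) ltac:(lia).
  move: hw2 nw2; rewrite !nbE !inE !negb_or => hw2 /andP[w2v w2o].
  apply: (finish2 n8 sH hu huo hw2).
  + by rewrite eq_sym.
  + by rewrite eq_sym.
  + by rewrite eq_sym.
  + by apply: cnt1 => //; [rewrite nbE | rewrite dv; lia].
Qed.

Ltac unrc := repeat match goal with
  | h : context [@reverse_coercion _ _ _ _] |- _ => unfold reverse_coercion in h
  | |- context [@reverse_coercion _ _ _ _] => unfold reverse_coercion end.
Ltac lia' := unrc; lia.

Lemma dcount N (H : rel 'I_N) (A O : {set 'I_N}) : (forall x y, H x y = H y x) ->
  \sum_(u in A) #|nb H u :&: O| = \sum_(o in O) #|nb H o :&: A|.
Proof.
move=> sym.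
have e : forall u (B : {set 'I_N}), #|nb H u :&: B| = \sum_(o in B) (if H u o then 1 else 0).
  move=> u B; rewrite -sum1_card -big_mkcondr; apply: eq_bigl => x; by rewrite !inE andbC.
under eq_bigr do rewrite e.
rewrite exchange_big; apply: eq_bigr => o _; rewrite e; apply: eq_bigr => u _; by rewrite sym.
Qed.

Lemma case_reg m n N (H : rel 'I_N) (v0 : 'I_N) : 5 <= m -> 8 <= n -> m < n -> N = m + n - 4 -> simple_graph H ->
  (forall x, n - 3 <= #|nb H x|) -> (forall x, #|nb H x| <= n - 3) ->
  contains (tree1 n) H /\ contains (tree2 n) H.
Proof.
move=> m5 n8 mn eN sH deg mx.
have [irr sym] := sH.
have dg : forall x, #|nb H x| = n - 3 by move=> x; apply/eqP; rewrite eqn_leq deg mx.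
set A := nb H v0.
set O := ~: (v0 |: A).
have eA : #|A| = n - 3 by rewrite dg.
have eO : #|O| = m - 2.
  have vA : v0 \notin A by rewrite /A nbE irr.
  rewrite /O; have := cardsC (v0 |: A); rewrite card_ord cardsU1 eA vA /=; lia'.
have inO : forall o, (o \in O) = ~~ ((o == v0) || H v0 o) by move=> o; rewrite !inE.
have F1 : forall o y, o \in O -> H o y -> y != v0.
  by move=> o y; rewrite inO negb_or => /andP[_ h] hy; apply/eqP => e; move: h; rewrite sym -e hy.
have AO : forall x y, H v0 x -> y \in O -> x != y.
  by move=> x y hx; rewrite inO negb_or => /andP[_ h]; apply/eqP => e; move: h; rewrite -e hx.
have vO : forall y, y \in O -> v0 != y.
  by move=> y; rewrite inO negb_or eq_sym => /andP[-> _].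
have F2 : forall o, o \in O -> n - m <= #|nb H o :&: A|.
  move=> o oO.
  have sub : nb H o \subset (O :\ o) :|: (nb H o :&: A).
    apply/subsetP => y; rewrite !inE => hy; rewrite hy /=.
    case hA: (H v0 y); first by rewrite orbT.
    by rewrite orbF eq_sym (neqE sH hy) (negbTE (F1 _ _ oO hy)).
  have := subset_leq_card sub; have := cardU_le (O :\ o) (nb H o :&: A).
  have := cardsD1 o O; rewrite oO eO dg /=. lia'.
have [o1 o1O _] := @pickd _ O set0 0 (m - 2) ltac:(by rewrite cards0) ltac:(by rewrite eO) ltac:(lia).
split.
-
  have [a1 ha1 _] := @pickd _ (nb H o1 :&: A) set0 0 (n - m) ltac:(by rewrite cards0) (F2 _ o1O) ltac:(lia).
  move: ha1; rewrite !inE => /andP[ho1a1 hva1].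
  have cntO : forall x y, x \in O -> y \in O -> n - 3 <= #|nb H v0 :\: [set x; y]|.
    move=> x y xO yO; apply: cnt0; last by rewrite dg.
      by rewrite nbE; apply/negP => h; have := AO _ _ h xO; rewrite eqxx.
    by rewrite nbE; apply/negP => h; have := AO _ _ h yO; rewrite eqxx.
  case: (classic (exists o a', [/\ o \in O, H o a', H v0 a' & a' != a1])).
  + move=> [o [a' [oO hoa hva ne]]].
    case: (o =P o1) => [eo | no].
    * subst o.
      have [o2 o2O no2] := @pickd _ O [set o1] 1 (m - 2) (card1le o1) ltac:(by rewrite eO) ltac:(lia).
      have [a2 ha2 _] := @pickd _ (nb H o2 :&: A) set0 0 (n - m) ltac:(by rewrite cards0) (F2 _ o2O) ltac:(lia).
      move: ha2 no2; rewrite !inE => /andP[ho2a2 hva2] no2.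
      case: (a2 =P a1) => [ea | na].
      - subst a2.
        apply: (@finish1 N H n v0 a' a1 o1 o2 n8 sH hva hva1 _ _ ne _ (vO _ o1O) (vO _ o2O) (AO _ _ hva o2O) (AO _ _ hva1 o1O) (cntO _ _ o1O o2O)).
        + by rewrite sym.
        + by rewrite sym.
        + by rewrite eq_sym.
      - apply: (@finish1 N H n v0 a1 a2 o1 o2 n8 sH hva1 hva2 _ _ _ _ (vO _ o1O) (vO _ o2O) (AO _ _ hva1 o2O) (AO _ _ hva2 o1O) (cntO _ _ o1O o2O)).
        + by rewrite sym.
        + by rewrite sym.
        + by rewrite eq_sym; apply/eqP.
        + by rewrite eq_sym.
    * apply: (@finish1 N H n v0 a1 a' o1 o n8 sH hva1 hva _ _ _ _ (vO _ o1O) (vO _ oO) (AO _ _ hva1 oO) (AO _ _ hva o1O) (cntO _ _ o1O oO)).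
      + by rewrite sym.
      + by rewrite sym.
      + by rewrite eq_sym.
      + by rewrite eq_sym; apply/eqP.
  + move=> hno.
    have only : forall o a, o \in O -> H o a -> H v0 a -> a = a1.
      move=> o a oO hoa hva; apply/eqP/negPn/negP => ne; apply: hno; by exists o, a.
    have t1 : #|nb H o1 :&: A| <= 1.
      have : nb H o1 :&: A \subset [set a1].
        by apply/subsetP => y; rewrite !inE => /andP[h1 h2]; rewrite (only _ _ o1O h1 h2).
      by move/subset_leq_card; rewrite cards1.
    have em : m = n - 1 by have := F2 _ o1O; lia'.
    have sub : v0 |: O \subset nb H a1.
      apply/subsetP => y; rewrite in_setU1 nbE => /orP[/eqP -> | yO]; first by rewrite sym.
      have [ay hay _] := @pickd _ (nb H y :&: A) set0 0 (n - m) ltac:(by rewrite cards0) (F2 _ yO) ltac:(lia).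
      move: hay; rewrite !inE => /andP[h1 h2].
      by rewrite -(only _ _ yO h1 h2) sym.
    have := subset_leq_card sub; rewrite cardsU1 eO dg.
    have -> : v0 \notin O by rewrite inO eqxx.
    simpl; lia'.
-
  case: (classic (exists u, H v0 u /\ 2 <= #|nb H u :&: O|)).
  + move=> [u [hu c2]].
    have [w1 hw1 _] := @pickd _ (nb H u :&: O) set0 0 2 ltac:(by rewrite cards0) c2 ltac:(lia).
    have [w2 hw2 nw2] := @pickd _ (nb H u :&: O) [set w1] 1 2 (card1le w1) c2 ltac:(lia).
    move: hw1 hw2 nw2; rewrite !in_setI !nbE in_set1 => /andP[h1 o1'] /andP[h2 o2'] nw2.
    apply: (finish2 n8 sH hu h1 h2).
    * by rewrite eq_sym.
    * exact: vO.
    * exact: vO.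
    * by apply: cnt0; [rewrite nbE; apply/negP => h; move: (AO _ _ h o1'); rewrite eqxx
                      | rewrite nbE; apply/negP => h; move: (AO _ _ h o2'); rewrite eqxx | rewrite dg].
  + move=> hno.
    have hle : forall u, u \in A -> #|nb H u :&: O| <= 1.
      move=> u; rewrite nbE => hu; rewrite leqNgt; apply/negP => c; apply: hno; by exists u.
    have S1 : \sum_(u in A) #|nb H u :&: O| <= n - 3.
      rewrite -eA -sum1_card; exact: leq_sum.
    have S2 : #|O| * (n - m) <= \sum_(o in O) #|nb H o :&: A|.
      rewrite -sum_nat_const; exact: leq_sum.
    rewrite dcount // in S1.
    have em : m = n - 1 by move: (leq_trans S2 S1); rewrite eO; unrc; nia.
    have [a ha _] := @pickd _ (nb H o1 :&: A) set0 0 (n - m) ltac:(by rewrite cards0) (F2 _ o1O) ltac:(lia).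
    have t1 : #|nb H o1 :&: A| <= 1.
      move: S1; rewrite (bigD1 o1) //=.
      have : #|O :\ o1| <= \sum_(i in O | i != o1) #|nb H i :&: A|.
        rewrite -sum1_card; rewrite (eq_bigl (fun i => (i \in O) && (i != o1))); last by move=> i; rewrite !inE andbC.
        apply: leq_sum => i /andP[iO _]; have := F2 _ iO; lia'.
      have := cardsD1 o1 O; rewrite o1O eO /=; lia'.
    move: ha; rewrite !inE => /andP[hoa hva].
    have hao : H a o1 by rewrite sym.
    have aA : a \in A by rewrite nbE.
    have sub : nb H a :&: (o1 |: nb H o1) \subset [set o1].
      apply/subsetP => y; rewrite !inE => /andP[hay /orP[-> // | hoy]].
      case hvy: (H v0 y).
        have : a = y.
          apply: (card_le1_eq t1); rewrite !inE ?hoa ?hva ?hoy ?hvy //.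
        by move=> e; move: hay; rewrite -e (negbTE (irr _)).
      have yO : y \in O by rewrite inO negb_or hvy andbT; exact: (F1 _ _ o1O hoy).
      apply/eqP; apply: (card_le1_eq (hle _ aA)); rewrite in_setI nbE ?hay ?hao //.
    have cD : n - 4 <= #|nb H a :\: (o1 |: nb H o1)|.
      rewrite cardsD dg; have := subset_leq_card sub; rewrite cards1; lia'.
    have [w1 hw1 _] := @pickd _ (nb H a :\: (o1 |: nb H o1)) set0 0 (n - 4) ltac:(by rewrite cards0) cD ltac:(lia).
    have [w2 hw2 nw2] := @pickd _ (nb H a :\: (o1 |: nb H o1)) [set w1] 1 (n - 4) (card1le w1) cD ltac:(lia).
    move: hw1 hw2 nw2; rewrite !inE !negb_or => /andP[/andP[ow1 nw1] h1] /andP[/andP[ow2 nw2'] h2] nw2.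
    apply: (finish2 n8 sH hoa h1 h2).
    * by rewrite eq_sym.
    * by rewrite eq_sym.
    * by rewrite eq_sym.
    * by apply: cnt0; [rewrite nbE | rewrite nbE | rewrite dg].
Qed.

Lemma core m n N (H : rel 'I_N) : 5 <= m -> 8 <= n -> m < n -> N = m + n - 4 -> simple_graph H ->
  (forall x, n - 3 <= #|nb H x|) -> contains (tree1 n) H /\ contains (tree2 n) H.
Proof.
move=> m5 n8 mn eN sH deg.
have N0 : 0 < N by lia.
case: (@arg_maxnP _ (Ordinal N0) xpredT (fun x => #|nb H x|) isT) => v0 _ hmax.
case: (ltnP (n - 2) #|nb H v0|) => h1.
  by apply: (@case_big n N H v0 n8 sH deg); lia'.
case: (#|nb H v0| =P n - 2) => h2.
  exact: (case_mid m5 n8 mn eN sH deg h2).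
apply: (case_reg v0 m5 n8 mn eN sH deg) => x.
have := hmax x isT; have := deg v0; move=> *; lia'.
Qed.

Lemma deg_of_map N (G : rel 'I_N) k (f : 'I_k -> 'I_N) x : injective f -> (forall i, G x (f i)) -> k <= #|nb G x|.
Proof.
move=> fi hf; have sub : f @: setT \subset nb G x.
  by apply/subsetP => y /imsetP[i _ ->]; rewrite nbE.
by have := subset_leq_card sub; rewrite card_imset // cardsT card_ord.
Qed.

Lemma star_of_deg m N (G : rel 'I_N) x : 1 <= m -> simple_graph G -> m - 1 <= #|nb G x| -> contains (star m) G.
Proof.
move=> m1 [irr sym] c.
set t := take (m - 1) (enum (nb G x)).
have st : size t = m - 1 by rewrite /t size_take -cardE; case: ltnP => //; lia.
have tS : forall z, z \in t -> G x z by move=> z /mem_take; rewrite mem_enum nbE.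
set L := x :: t.
have sL : size L = m by rewrite /L /= st; lia.
have uL : uniq L.
  rewrite /L cons_uniq take_uniq ?enum_uniq // andbT.
  by apply/negP => /tS; rewrite (negbTE (irr x)).
pose f := fun i : 'I_m => nth x L i.
exists f; split.
  move=> i j /eqP; rewrite /f nth_uniq ?sL ?ltn_ord // => /eqP h; exact: val_inj.
have key : forall a b : 'I_m, val a = 0 -> val b != 0 -> G (f a) (f b).
  move=> a [[|k] hk] a0 //= _; rewrite /f a0 /=; apply: tS; apply: mem_nth; rewrite st; lia.
move=> i j /orP[] /andP[/eqP h1 h2]; first exact: key.
by rewrite sym; apply: key.
Qed.

Lemma deg_of_star m N (G : rel 'I_N) : 1 <= m -> contains (star m) G -> exists x, m - 1 <= #|nb G x|.
Proof.
move=> m1 [f [fi hf]].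
have lt : forall k : 'I_(m - 1), k.+1 < m by move=> k; have := ltn_ord k; lia.
pose h := fun k : 'I_(m - 1) => Ordinal (lt k).
exists (f (Ordinal m1)); apply: (@deg_of_map _ _ _ (fun k => f (h k))).
  by move=> a b /fi /(congr1 val) /= [] /val_inj.
by move=> i; apply: hf; rewrite /star /symc /=.
Qed.

Lemma deg_of_tree n N (G : rel 'I_N) j : 4 <= n -> (j == 1) || (j == 2) -> contains (treej j n) G -> exists x, n - 3 <= #|nb G x|.
Proof.
move=> n4 hj [f [fi hf]].
have n0 : 0 < n by lia.
have lt : forall k : 'I_(n - 3), k.+1 < n by move=> k; have := ltn_ord k; lia.
pose h := fun k : 'I_(n - 3) => Ordinal (lt k).
exists (f (Ordinal n0)); apply: (@deg_of_map _ _ _ (fun k => f (h k))).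
  by move=> a b /fi /(congr1 val) /= [] /val_inj.
move=> i; apply: hf; have := ltn_ord i => hi.
rewrite /treej; case: (j == 1); rewrite /tree1 /tree2 /symc /=; apply/orP; left;
  apply/orP; left; lia.
Qed.

Lemma compl_deg N (G : rel 'I_N) x : simple_graph G -> #|nb (compl_graph G) x| = N - 1 - #|nb G x|.
Proof.
move=> [irr sym].
have -> : nb (compl_graph G) x = ~: (x |: nb G x).
  by apply/setP => y; rewrite !inE /compl_graph negb_or eq_sym.
have := cardsC (x |: nb G x); rewrite card_ord cardsU1 nbE (irr x) /=; lia'.
Qed.

Lemma compl_simple N (G : rel 'I_N) : simple_graph G -> simple_graph (compl_graph G).
Proof.
move=> [irr sym]; split => [x | x y]; rewrite /compl_graph ?eqxx //.
by rewrite eq_sym sym.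
Qed.

Lemma upper_prop m n j : 5 <= m -> 8 <= n -> m < n -> (j == 1) || (j == 2) ->
  ramsey_prop (star m) (treej j n) (m + n - 4).
Proof.
move=> m5 n8 mn hj G sG.
case: (classic (contains (star m) G)) => hs; [by left | right].
have dG : forall x, #|nb G x| <= m - 2.
  move=> x; rewrite leqNgt; apply/negP => h; apply: hs; apply: (star_of_deg (x := x)) => //; lia.
have deg : forall x, n - 3 <= #|nb (compl_graph G) x|.
  by move=> x; rewrite compl_deg //; have := dG x; lia.
have [c1 c2] := core m5 n8 mn erefl (compl_simple sG) deg.
by rewrite /treej; case: (j == 1).
Qed.

Lemma fail_of_deg M (G : rel 'I_M) m n j : 2 <= m -> 4 <= n -> (j == 1) || (j == 2) -> simple_graph G ->
  (forall x, #|nb G x| <= m - 2) -> (forall x, #|nb (compl_graph G) x| <= n - 4) ->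
  ~ ramsey_prop (star m) (treej j n) M.
Proof.
move=> m1 n4 hj sG d1 d2 hp.
case: (hp G sG) => [/(deg_of_star (ltnW m1)) [x hx] | /(deg_of_tree n4 hj) [x hx]].
  by have := d1 x; lia'.
by have := d2 x; lia'.
Qed.

Definition cdist M (x y : 'I_M) : nat := if x <= y then y - x else y + M - x.
Definition circ M (P : nat -> bool) : rel 'I_M := fun x y => (x != y) && P (cdist x y).

Lemma cdist_lt M (x y : 'I_M) : cdist x y < M.
Proof. have := ltn_ord x; have := ltn_ord y; rewrite /cdist; case: ifP; lia. Qed.

Lemma circ_simple M P : (forall d, 0 < d < M -> P (M - d) = P d) -> simple_graph (@circ M P).
Proof.
move=> hP; split => [x | x y]; first by rewrite /circ eqxx.
rewrite /circ eq_sym; case: (y =P x) => [//|ne] /=.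
have ne' : (x : nat) != y by apply/eqP => e; apply: ne; apply/val_inj.
have hx := ltn_ord x; have hy := ltn_ord y.
have e : cdist y x = M - cdist x y by rewrite /cdist; case: ifP; case: ifP; lia.
rewrite e hP //; rewrite /cdist; case: ifP; lia.
Qed.

Lemma compl_circ M P (x y : 'I_M) : compl_graph (circ P) x y = circ (fun d => ~~ P d) x y.
Proof. by rewrite /compl_graph /circ; case: (x != y). Qed.

Lemma circ_deg M P (x : 'I_M) : #|nb (circ P) x| <= #|[set d : 'I_M | (0 < d) && P d]|.
Proof.
pose g := fun y => Ordinal (cdist_lt x y).
have gi : injective g.
  move=> y z /(congr1 val) /=; have := ltn_ord x; have := ltn_ord y; have := ltn_ord z.
  rewrite /cdist; case: ifP; case: ifP => ? ? ? ? ? e; apply: ord_inj; lia.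
have sub : g @: nb (circ P) x \subset [set d : 'I_M | (0 < d) && P d].
  apply/subsetP => d /imsetP[y]; rewrite nbE /circ => /andP[ne hp] ->; rewrite inE /= hp andbT.
  have ne' : (x : nat) != y by apply/eqP => e; move: ne; rewrite (val_inj e) eqxx.
  have := ltn_ord x; have := ltn_ord y; rewrite /cdist; case: ifP; lia.
by have := subset_leq_card sub; rewrite card_imset.
Qed.

Lemma card_set_nat M (Q : nat -> bool) : #|[set d : 'I_M | Q d]| = \sum_(0 <= i < M) Q i.
Proof.
rewrite -sum1_card big_mkcond /= big_mkord; apply: eq_bigr => i _; rewrite inE; by case: (Q i).
Qed.

Lemma sum_bound a b (F : nat -> nat) c : (forall i, a <= i < b -> F i <= c) -> \sum_(a <= i < b) F i <= (b - a) * c.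
Proof.
move=> h; rewrite -sum_nat_const_nat big_nat_cond [X in _ <= X]big_nat_cond.
by apply: leq_sum => i /andP[hi _]; exact: h.
Qed.

Lemma sum_split a b c (F : nat -> nat) : a <= b -> b <= c ->
  \sum_(a <= i < c) F i = \sum_(a <= i < b) F i + \sum_(b <= i < c) F i.
Proof. move=> h1 h2; exact: big_cat_nat. Qed.

Lemma b0 (b : bool) : ~~ b -> b <= 0. Proof. by case: b. Qed.

Definition bandP M k := fun d => (d <= k) || (M - k <= d).

Lemma band_sym M k d : 0 < d < M -> bandP M k (M - d) = bandP M k d.
Proof. move=> h; rewrite /bandP orbC; apply/idP/idP => /orP[] ?; apply/orP; lia. Qed.

Lemma band_cnt M k : 2 * k < M ->
  #|[set d : 'I_M | (0 < d) && bandP M k d]| <= 2 * k /\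
  #|[set d : 'I_M | (0 < d) && ~~ bandP M k d]| <= M - 1 - 2 * k.
Proof.
move=> hk; rewrite (card_set_nat M (fun i => (0 < i) && bandP M k i)) (card_set_nat M (fun i => (0 < i) && ~~ bandP M k i)).
rewrite !(@sum_split 0 1 M) ?(@sum_split 1 k.+1 M) ?(@sum_split k.+1 (M - k) M); try lia.
split.
- have h1 := @sum_bound 0 1 (fun i => (0 < i) && bandP M k i) 0 ltac:(move=> [|i] //= _; lia).
  have h2 := @sum_bound 1 k.+1 (fun i => (0 < i) && bandP M k i) 1 ltac:(move=> i _ /=; exact: leq_b1).
  have h3 := @sum_bound k.+1 (M - k) (fun i => (0 < i) && bandP M k i) 0
     ltac:(move=> i hi /=; apply: b0; rewrite /bandP; apply/negP => /andP[_ /orP[] ?]; lia).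
  have h4 := @sum_bound (M - k) M (fun i => (0 < i) && bandP M k i) 1 ltac:(move=> i _ /=; exact: leq_b1).
  lia.
- have h1 := @sum_bound 0 1 (fun i => (0 < i) && ~~ bandP M k i) 0 ltac:(move=> [|i] //= _; lia).
  have h2 := @sum_bound 1 k.+1 (fun i => (0 < i) && ~~ bandP M k i) 0
     ltac:(move=> i hi /=; apply: b0; rewrite /bandP; apply/negP => /andP[_ /norP[] ? ?]; lia).
  have h3 := @sum_bound k.+1 (M - k) (fun i => (0 < i) && ~~ bandP M k i) 1 ltac:(move=> i _ /=; exact: leq_b1).
  have h4 := @sum_bound (M - k) M (fun i => (0 < i) && ~~ bandP M k i) 0
     ltac:(move=> i hi /=; apply: b0; rewrite /bandP; apply/negP => /andP[_ /norP[] ? ?]; lia).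
  lia.
Qed.

Lemma fail1 M k m n j : 2 <= m -> 4 <= n -> (j == 1) || (j == 2) -> 2 * k < M ->
  2 * k <= m - 2 -> M - 1 - 2 * k <= n - 4 -> ~ ramsey_prop (star m) (treej j n) M.
Proof.
move=> m1 n4 hj hk h1 h2.
have [c1 c2] := band_cnt hk.
have sG := circ_simple (@band_sym M k).
apply: (fail_of_deg m1 n4 hj sG) => x.
  exact: leq_trans (circ_deg _ x) (leq_trans c1 h1).
have -> : nb (compl_graph (circ (bandP M k))) x = nb (circ (fun d => ~~ bandP M k d)) x.
  by apply/setP => y; rewrite !nbE compl_circ.
exact: leq_trans (circ_deg _ x) (leq_trans c2 h2).
Qed.

Lemma fail2 M k m n j : 2 <= m -> 4 <= n -> (j == 1) || (j == 2) -> 2 * k < M ->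
  2 * k <= n - 4 -> M - 1 - 2 * k <= m - 2 -> ~ ramsey_prop (star m) (treej j n) M.
Proof.
move=> m1 n4 hj hk h1 h2.
have [c1 c2] := band_cnt hk.
have sG := circ_simple (@band_sym M k).
apply: (fail_of_deg m1 n4 hj (compl_simple sG)) => x.
  have -> : nb (compl_graph (circ (bandP M k))) x = nb (circ (fun d => ~~ bandP M k d)) x.
    by apply/setP => y; rewrite !nbE compl_circ.
  exact: leq_trans (circ_deg _ x) (leq_trans c2 h2).
have -> : nb (compl_graph (compl_graph (circ (bandP M k)))) x = nb (circ (bandP M k)) x.
  by apply/setP => y; rewrite !nbE /compl_graph /circ; case: (x != y); rewrite //= negbK.
exact: leq_trans (circ_deg _ x) (leq_trans c1 h1).
Qed.

Lemma mono_step m n j M : ramsey_prop (star m) (treej j n) M -> ramsey_prop (star m) (treej j n) M.+1.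
Proof.
move=> hp G [irr sym].
pose w := fun x : 'I_M => widen_ord (leqnSn M) x.
have wi : injective w by move=> a b /(congr1 val) /= /val_inj.
pose G' : rel 'I_M := fun x y => G (w x) (w y).
have sG' : simple_graph G' by split => [x | x y]; rewrite /G'; [exact: irr | exact: sym].
case: (hp G' sG') => [[f [fi hf]] | [f [fi hf]]]; [left | right];
  exists (fun i => w (f i)); split; try by move=> a b /wi /fi.
  by move=> a b /hf.
move=> a b /hf; rewrite /compl_graph /G' => /andP[ne ->]; rewrite andbT.
by apply/negP => /eqP /wi /eqP; apply/negP.
Qed.

Lemma mono m n j M M' : M <= M' -> ramsey_prop (star m) (treej j n) M -> ramsey_prop (star m) (treej j n) M'.
Proof.
elim: M' => [|M' IH] le hp; first by (have e : M = 0 by lia); rewrite e in hp.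
move: le; rewrite leq_eqVlt => /orP[/eqP e | lt]; first by rewrite -e.
by apply: mono_step; apply: IH => //; lia.
Qed.

Theorem theorem6p1 (m n j : nat) :
  5 <= m -> 8 <= n -> m < n -> (j == 1) || (j == 2) ->
  (is_ramsey_number (star m) (treej j n) (m + n - 4) \/
   is_ramsey_number (star m) (treej j n) (m + n - 5)) /\
  (~~ odd (m * n) -> is_ramsey_number (star m) (treej j n) (m + n - 4)).
Proof.
move=> m5 n8 mn hj.
have up := upper_prop m5 n8 mn hj.
have m2 : 2 <= m by lia.
have n4 : 4 <= n by lia.
have f6 : ~ ramsey_prop (star m) (treej j n) (m + n - 6).
  apply: (@fail1 _ ((m - 2) %/ 2) _ _ _ m2 n4 hj); lia.
have below : forall N', ~ ramsey_prop (star m) (treej j n) N' -> forall M, M <= N' -> ~ ramsey_prop (star m) (treej j n) M.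
  by move=> N' hN M le hM; apply: hN; apply: (mono le hM).
have r4 : ~ ramsey_prop (star m) (treej j n) (m + n - 5) -> is_ramsey_number (star m) (treej j n) (m + n - 4).
  move=> h5; split; first lia; split => // M M0 lt; apply: (below _ h5); lia.
split.
  case: (classic (ramsey_prop (star m) (treej j n) (m + n - 5))) => h5; last by left; apply: r4.
  right; split; first lia; split => // M M0 lt; apply: (below _ f6); lia.
move=> ev; apply: r4.
have hm := divn_eq m 2; have hn := divn_eq n 2.
rewrite oddM negb_and in ev.
case/orP: ev => ev.
  rewrite modn2 (negbTE ev) in hm.
  apply: (@fail1 _ ((m - 2) %/ 2) _ _ _ m2 n4 hj); lia.
rewrite modn2 (negbTE ev) in hn.
apply: (@fail2 _ ((n - 4) %/ 2) _ _ _ m2 n4 hj); lia.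
Qed.
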